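(* If the random vector $(X_1,\dots,X_n)$ is exchangeable, then $(-X_1,X_2,\dots,X_n)$ is SIAMX* and SIAMN*.
   Context: Exchangeable means the distribution is invariant under all permutations of coordinates. For random variables $U,V$, $U\le_{\mathrm{st}}V$ means $F_U(x)\ge F_V(x)$ for all $x$ ($F$ the cdf). A random vector $(Y_1,\dots,Y_n)$ is SIAMX* if $|Y_1|\overset{d}{=}|\max(Y_1,Y_2)|$ and $|\max(Y_1,\dots,Y_{l-1})|\le_{\mathrm{st}}|\max(Y_1,\dots,Y_l)|$ for $l=3,\dots,n$; SIAMN* is the same with $\max$ replaced by $\min$. *)

(* Defs.v *)
From HB Require Import structures.
From mathcomp Require Import all_boot all_order all_algebra all_fingroup.
From mathcomp Require Import all_classical all_reals all_analysis.

Set Implicit Arguments.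
Unset Strict Implicit.
Unset Printing Implicit Defensive.

Import Order.TTheory GRing.Theory Num.Theory.
Local Open Scope classical_set_scope.
Local Open Scope ring_scope.

(* A random vector (X_1,...,X_n) is modelled as X : nat -> T -> R, where the
   coordinate X_{i+1} is X i (0-indexed); only X 0, ..., X (n-1) matter. *)

Section Defs.
Context {d : measure_display} {T : measurableType d} {R : realType}.

(* Cylinder sets {f : 'I_n -> R | f i \in B}, B Borel, generating the
   product sigma-algebra on R^n. *)
Definition cylinders (n : nat) : set (set ('I_n -> R)) :=
  [set A | exists i : 'I_n, exists B : set R, measurable B /\ A = [set f | B (f i)]].

Definition vec_measurable (n : nat) (A : set ('I_n -> R)) : Prop :=
  <<s @cylinders n >> A.

Definition exchangeable (P : probability T R) (n : nat) (X : nat -> T -> R) : Prop :=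
  forall (s : {perm 'I_n}) (A : set ('I_n -> R)), vec_measurable A ->
    P ((fun t (i : 'I_n) => X (s i) t) @^-1` A) =
    P ((fun t (i : 'I_n) => X i t) @^-1` A).

Definition dist_eq (P : probability T R) (U V : T -> R) : Prop :=
  forall B : set R, measurable B -> P (U @^-1` B) = P (V @^-1` B).

Definition st_le (P : probability T R) (U V : T -> R) : Prop :=
  forall x : R, (P [set t | (V t <= x)%R] <= P [set t | (U t <= x)%R])%E.

Definition maxY (Y : nat -> T -> R) (l : nat) (t : T) : R :=
  \big[Num.max/Y 0%N t]_(i < l) Y i t.
Definition minY (Y : nat -> T -> R) (l : nat) (t : T) : R :=
  \big[Num.min/Y 0%N t]_(i < l) Y i t.

Definition SIAMX (P : probability T R) (n : nat) (Y : nat -> T -> R) : Prop :=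
  dist_eq P (fun t => `|Y 0%N t|) (fun t => `|maxY Y 2 t|) /\
  forall l : nat, (3 <= l <= n)%N ->
    st_le P (fun t => `|maxY Y l.-1 t|) (fun t => `|maxY Y l t|).

Definition SIAMN (P : probability T R) (n : nat) (Y : nat -> T -> R) : Prop :=
  dist_eq P (fun t => `|Y 0%N t|) (fun t => `|minY Y 2 t|) /\
  forall l : nat, (3 <= l <= n)%N ->
    st_le P (fun t => `|minY Y l.-1 t|) (fun t => `|minY Y l t|).

Definition negfirst (X : nat -> T -> R) : nat -> T -> R :=
  fun i t => if i == 0%N then - X i t else X i t.

End Defs.

(* Main.v *)
Require Import Defs.
From HB Require Import structures.
From mathcomp Require Import all_boot all_order all_algebra all_fingroup.
From mathcomp Require Import all_classical all_reals all_analysis.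
From mathcomp Require Import lra measurable_realfun.
Import Order.TTheory GRing.Theory Num.Theory.
Local Open Scope classical_set_scope.
Local Open Scope ring_scope.

Section Vec.
Context (R : realType) (n : nat).

Lemma vec_meas_prod (B : 'I_n -> set R) : (forall i, measurable (B i)) ->
  vec_measurable [set f : 'I_n -> R | forall i, B i (f i)].
Proof.
move=> mB.
have := (@sigma_algebraP _ setT <<s @cylinders R n >> (fun _ _ _ _ => I)).1 (smallest_sigma_algebra _ _).
case=> CT _ _ CI.
suff H : forall s : seq 'I_n, vec_measurable [set f : 'I_n -> R | forall i, i \in s -> B i (f i)].
  have -> : [set f : 'I_n -> R | forall i, B i (f i)] =
     [set f : 'I_n -> R | forall i, i \in enum 'I_n -> B i (f i)].
    by apply/seteqP; split => f /= Hf i //; apply: Hf; rewrite mem_enum.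
  exact: H.
elim=> [|a s IH].
  have -> : [set f : 'I_n -> R | forall i, i \in [::] -> B i (f i)] = setT.
    by apply/seteqP; split => f //=.
  exact: CT.
have -> : [set f : 'I_n -> R | forall i, i \in a :: s -> B i (f i)] =
   [set f | B a (f a)] `&` [set f : 'I_n -> R | forall i, i \in s -> B i (f i)].
  apply/seteqP; split => f /=.
    by move=> Hf; split; [apply: Hf; rewrite inE eqxx|move=> i iS; apply: Hf; rewrite inE iS orbT].
  by move=> [Ha Hs] i; rewrite inE => /orP[/eqP->//|]; exact: Hs.
apply: CI => //; apply: sub_sigma_algebra; exists a, (B a); split => //.
Qed.

End Vec.

Section Main.
Context (d : measure_display) (T : measurableType d) (R : realType) (P : probability T R).

Lemma bigmax_recr (a : R) k (F : nat -> R) :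
  \big[Num.max/a]_(i < k.+1) F i = Num.max (\big[Num.max/a]_(i < k) F i) (F k).
Proof.
elim: k F => [|k IH] F.
  by rewrite big_ord_recl !big_ord0 maxC.
rewrite big_ord_recl.
under eq_bigr do rewrite lift0.
rewrite (IH (fun j => F j.+1)) big_ord_recl.
under [X in _ = Num.max (Num.max _ X) _]eq_bigr do rewrite lift0.
by rewrite maxA.
Qed.

Lemma maxYS (Y : nat -> T -> R) k t : maxY Y k.+1 t = Num.max (maxY Y k t) (Y k t).
Proof. exact: (bigmax_recr (Y 0%N t) k (fun i => Y i t)). Qed.
Lemma maxY0 (Y : nat -> T -> R) t : maxY Y 0 t = Y 0%N t.
Proof. by rewrite /maxY big_ord0. Qed.

Lemma le_maxY (Y : nat -> T -> R) k t i : (i < k)%N -> Y i t <= maxY Y k t.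
Proof.
elim: k => // k IH; rewrite ltnS leq_eqVlt maxYS => /orP[/eqP->|/IH h].
  by rewrite le_max lexx orbT.
by rewrite le_max h.
Qed.

Lemma le0_maxY (Y : nat -> T -> R) k t : Y 0%N t <= maxY Y k t.
Proof. by elim: k => [|k IH]; rewrite ?maxY0 // maxYS le_max IH. Qed.

Lemma maxY_lt (Y : nat -> T -> R) k t c : Y 0%N t < c ->
  (forall i, (i < k)%N -> Y i t < c) -> maxY Y k t < c.
Proof.
move=> h0; elim: k => [|k IH] H; first by rewrite maxY0.
by rewrite maxYS gt_max IH ?H // => i ik; apply: H; exact: ltnW.
Qed.

Lemma maxY_eq0 (Y : nat -> T -> R) k t :
  (forall i, (i < k)%N -> Y i t <= Y 0%N t) -> maxY Y k t = Y 0%N t.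
Proof.
elim: k => [|k IH] H; first by rewrite maxY0.
rewrite maxYS IH ?H // ?max_l ?H //.
by move=> i ik; apply: H; exact: ltnW.
Qed.

Lemma maxY_meas (Y : nat -> T -> R) k :
  (forall i, (i <= k)%N -> measurable_fun setT (Y i)) -> measurable_fun setT (maxY Y k).
Proof.
elim: k => [|k IH] H.
  have -> : maxY Y 0 = Y 0%N by apply/funext => t; rewrite maxY0.
  exact: H.
have -> : maxY Y k.+1 = (maxY Y k) \max (Y k) by apply/funext => t; rewrite maxYS.
apply: measurable_maxr; last exact: H.
by apply: IH => i ik; apply: H; exact: leqW.
Qed.

Lemma adde_cancel (x a b : \bar R) : x \is a fin_num -> (a + x = b + x)%E -> a = b.
Proof. by move=> fx h; rewrite -(addeK a fx) h addeK. Qed.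

Section Inner.
Variables U V : T -> R.
Hypothesis mU : measurable_fun setT U.
Hypothesis mV : measurable_fun setT V.
HB.instance Definition _ := isMeasurableFun.Build _ _ _ _ U mU.
HB.instance Definition _ := isMeasurableFun.Build _ _ _ _ V mV.

Lemma distr_oc (W : {mfun T >-> R}) (a b : R) : (a <= b) ->
  (P [set t | W t <= b]%R = P [set t | W t <= a]%R + distribution P W `]a, b])%E.
Proof.
move=> ab; rewrite /distribution /pushforward -measureU.
- congr (P _); apply/seteqP; split => t /=; rewrite /preimage /= in_itv /=.
    by move=> h; case: (lerP (W t) a) => h'; [left|right; apply/andP; split].
  by case=> [h|/andP[_ h]] //; exact: le_trans h ab.
- have -> : [set t | W t <= a] = W @^-1` `]-oo, a].
    by apply/seteqP; split => t; rewrite /preimage /= in_itv.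
  exact: measurable_funPTI (measurable_itv `]-oo, a]).
- exact: measurable_funPTI (measurable_itv `]a, b]).
- apply/seteqP; split => t //= []; rewrite /preimage /= in_itv /= => h /andP[h' _]; lra.
Qed.

Lemma measW (W : {mfun T >-> R}) (a : R) : measurable [set t | W t <= a].
Proof.
have -> : [set t | W t <= a] = W @^-1` `]-oo, a].
  by apply/seteqP; split => t; rewrite /preimage /= in_itv.
exact: measurable_funPTI (measurable_itv `]-oo, a]).
Qed.

Lemma cdf_dist_eq : (forall x, P [set t | U t <= x] = P [set t | V t <= x]) ->
  dist_eq P U V.
Proof.
move=> H B mB.
have := @measure_unique _ R _ (@ocitv R) (fun k => `]-k%:R, k%:R]%classic) erefl
  (@ocitvI R) (fun k => is_ocitv _ _) _ (distribution P U) (distribution P V) _ _ B mB.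
apply.
- apply/seteqP; split => y // _.
  have [k hk] : exists k : nat, `|y| < k%:R.
    by exists (Num.Def.archi_bound `|y|); apply: archi_boundP.
  exists k => //=; rewrite in_itv /=; move: hk; rewrite ltr_norml => /andP[h1 h2].
  by rewrite h1 ltW.
- move=> A [[a b] _ <-] /=.
  have [ab|ba] := leP a b.
    apply: (@adde_cancel (P [set t | U t <= a])).
      exact: (fin_num_measure P _ (measW U a)).
    rewrite addeC -(distr_oc U a b ab); transitivity (P [set t | V t <= b]); first exact: H.
    rewrite (distr_oc V a b ab) addeC; congr (_ + _); symmetry; exact: H.
  by rewrite set_itv_ge ?measure0 // bnd_simp -leNgt ltW.
- move=> k; apply: (le_lt_trans (probability_le1 _ _)) => //; exact: ltry.
Qed.

End Inner.

Lemma meas_le (f g : T -> R) : measurable_fun setT f -> measurable_fun setT g ->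
  measurable [set t | f t <= g t].
Proof.
move=> mf mg; have H := measurable_fun_ler mf mg measurableT (Y := [set true]).
have := H ltac:(by []).
by rewrite setTI.
Qed.

Lemma meas_lt (f g : T -> R) : measurable_fun setT f -> measurable_fun setT g ->
  measurable [set t | f t < g t].
Proof.
move=> mf mg; have H := measurable_fun_ltr mf mg measurableT (Y := [set true]).
have := H ltac:(by []).
by rewrite setTI.
Qed.

Lemma decomp (U Z : T -> R) (x : R) : measurable_fun setT U -> measurable_fun setT Z ->
 (P [set t | `|U t| <= x]%R + P ([set t | U t < - x]%R `&` [set t | `|Z t| <= x]%R) =
  P [set t | `|Num.max (U t) (Z t)| <= x]%R + P ([set t | `|U t| <= x]%R `&` [set t | x < Z t]%R))%E.
Proof.
move=> mU mZ.
have mn : forall f : T -> R, measurable_fun setT f -> measurable [set t | `|f t| <= x].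
  by move=> f mf; apply: (meas_le (fun t => `|f t|) (cst x)) => //; apply: measurableT_comp.
have mM : measurable_fun setT (fun t => Num.max (U t) (Z t)) by exact: measurable_maxr.
have m1 := mn _ mU.
have m2 : measurable ([set t | U t < - x] `&` [set t | `|Z t| <= x]).
  by apply: measurableI; [apply: (meas_lt U (cst (-x))) => //| exact: mn].
have m3 := mn _ mM.
have m4 : measurable ([set t | `|U t| <= x] `&` [set t | x < Z t]).
  by apply: measurableI; [exact: mn| apply: (meas_lt (cst x)) => //].
rewrite -!measureU //.
- congr (P _); apply/seteqP; split => t /=; set u := U t; set z := Z t;
  rewrite !ler_norml;
  case: (lerP u z) => uz; rewrite ?(max_r (ltW _)) ?max_r ?max_l //;
  case: (lerP (-x) u); case: (lerP u x); case: (lerP (-x) z); case: (lerP z x);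
  move=> /= *; (try tauto); try lra.
- apply/seteqP; split => t //= [].
  rewrite !ler_norml => /andP[_ +] [_ +] /=; rewrite ge_max => /andP[_]; lra.
- apply/seteqP; split => t //= [].
  rewrite !ler_norml => /andP[+ _] [+ _] /=; lra.
Qed.

Lemma meas_set {d' : measure_display} {T' : measurableType d'} (f g : T' -> R) :
  measurable_fun setT f -> measurable_fun setT g -> measurable [set t | f t < g t] /\ measurable [set t | f t <= g t].
Proof.
move=> mf mg; split.
  have H := measurable_fun_ltr mf mg measurableT (Y := [set true]).
  by have := H ltac:(by []); rewrite setTI.
have H := measurable_fun_ler mf mg measurableT (Y := [set true]).
by have := H ltac:(by []); rewrite setTI.
Qed.

Lemma meas_prodset n (B : 'I_n -> set R) (Z : 'I_n -> T -> R) :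
  (forall i, measurable (B i)) -> (forall i : 'I_n, measurable_fun setT (Z i)) ->
  measurable [set t | forall i : 'I_n, B i (Z i t)].
Proof.
move=> mB mZ.
have -> : [set t | forall i : 'I_n, B i (Z i t)] = \bigcap_(i in [set: 'I_n]) (Z i @^-1` B i).
  by apply/seteqP; split => t /= h i; [move=> _; exact: h | exact: h].
apply: fin_bigcap_measurable; first exact: finite_finset.
by move=> i _; rewrite -[_ @^-1` _]setTI; apply: (mZ i measurableT _ (mB i)).
Qed.

Section Key.
Variables (n : nat) (X : nat -> T -> R).
Hypothesis n2 : (2 <= n)%N.
Hypothesis mX : forall i, (i < n)%N -> measurable_fun setT (X i).
Hypothesis Hsw : forall (s : {perm 'I_n}) (B : 'I_n -> set R), (forall i, measurable (B i)) ->
  P [set t | forall i : 'I_n, B i (X (s i) t)] = P [set t | forall i : 'I_n, B i (X i t)].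

Let Y := negfirst X.

Lemma YE i t : Y i t = if i == 0%N then - X i t else X i t.
Proof. by []. Qed.

Lemma mY i : (i < n)%N -> measurable_fun setT (Y i).
Proof.
move=> ilt; case: (eqVneq i 0%N) => [->|i0].
  have -> : Y 0%N = fun t => - X 0%N t by [].
  by apply: measurableT_comp; [exact: oppr_measurable| apply: mX; rewrite -(ltn_predK n2)].
have -> : Y i = X i by apply/funext => t; rewrite YE (negbTE i0).
exact: mX.
Qed.

Section L.
Variables (l : nat) (x : R).
Hypothesis l2 : (2 <= l)%N.
Hypothesis ln : (l <= n)%N.

Let L := maxY Y l.-1.
Let Z := Y l.-1.

Let l1 : (l.-1 != 0)%N.
Proof. by rewrite -lt0n -ltnS (ltn_predK l2). Qed.
Let l1n : (l.-1 < n)%N.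
Proof. by rewrite (leq_trans _ ln) // ltn_predL (leq_trans _ l2). Qed.
Let n0 : (0 < n)%N.
Proof. exact: leq_trans _ n2. Qed.

Let i0 : 'I_n := Ordinal n0.
Let j : 'I_n := Ordinal l1n.

Definition B1 (i : 'I_n) : set R := [set y | if val i == 0%N then x < y
  else if val i == l.-1 then `|y| <= x else if (val i < l.-1)%N then y < - x else true].

Lemma mB1 i : measurable (B1 i).
Proof.
rewrite /B1; case: (val i == 0%N).
  by case: (meas_set (cst x) id (measurable_cst x) (@measurable_id _ _ setT)) => h _; exact: h.
case: (val i == l.-1).
  by case: (meas_set (@Num.Def.normr _ R) (cst x) (@normr_measurable R setT) (measurable_cst x)) => _ h; exact: h.
case: (val i < l.-1)%N.
  by case: (meas_set id (cst (- x)) (@measurable_id _ _ setT) (measurable_cst _)) => h _; exact: h.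
by rewrite [X in measurable X](_ : _ = setT) //; apply/seteqP; split.
Qed.

Let s := tperm i0 j.

Lemma ZE t : Z t = X l.-1 t.
Proof. by rewrite /Z YE (negbTE l1). Qed.

Lemma E1_eq : [set t | L t < - x] `&` [set t | `|Z t| <= x] =
  [set t | forall i : 'I_n, B1 i (X i t)].
Proof.
apply/seteqP; split => t /=.
  move=> [hL hZ] i; rewrite /B1 /=.
  case: ifP => [/eqP ->|i0'].
    have := le0_maxY Y l.-1 t; rewrite -/L YE /= => h; lra.
  case: ifP => [/eqP ->|ij]; first by rewrite -ZE.
  case: ifP => // il.
  have := @le_maxY Y l.-1 t i il; rewrite -/L YE i0' => h; lra.
move=> H; split.
  apply: maxY_lt.
    by have := H i0; rewrite /B1 /= YE /= => h; lra.
  move=> i il; rewrite YE; case: ifP => [/eqP ->|i0'].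
    by have := H i0; rewrite /B1 /= => h; lra.
  have ilt : (i < n)%N by rewrite (ltn_trans il).
  have := H (Ordinal ilt); rewrite /B1 /= i0' il (ltn_eqF il) //.
by have := H j; rewrite /B1 /= (negbTE l1) eqxx ZE.
Qed.

Lemma Sw_sub : [set t | forall i : 'I_n, B1 i (X (s i) t)] `<=`
  [set t | `|L t| <= x] `&` [set t | x < Z t].
Proof.
move=> t /= H.
have hj := H j; rewrite /s tpermR /B1 /= (negbTE l1) eqxx in hj.
have h0 := H i0; rewrite /s tpermL /B1 /= in h0.
split; last by rewrite ZE.
rewrite /L maxY_eq0; first by rewrite YE /= normrN.
move=> i il; rewrite !YE /=; case: ifP => [/eqP ->//|i0'].
have ilt : (i < n)%N by rewrite (ltn_trans il).
have := H (Ordinal ilt); rewrite /s tpermD.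
- rewrite /B1 /= i0' il (ltn_eqF il) /= => h.
  move: hj; rewrite ler_norml => /andP[_ h1]; lra.
- by apply/negP => /eqP/(congr1 val) /= /eqP; rewrite eq_sym i0'.
- by apply/negP => /eqP/(congr1 val) /= h; move: il; rewrite h ltnn.
Qed.


Lemma mE2 : measurable ([set t | `|L t| <= x]%R `&` [set t | x < Z t]%R).
Proof.
apply: measurableI.
  have mL : measurable_fun setT L by apply: maxY_meas => i il; apply: mY; rewrite (leq_ltn_trans il).
  by case: (meas_set (fun t => `|L t|) (cst x) _ _) => //; exact: measurableT_comp.
by case: (meas_set (cst x) Z _ _) => //; apply: mY.
Qed.

Lemma key_le : (P ([set t | L t < - x]%R `&` [set t | `|Z t| <= x]%R) <=
  P ([set t | `|L t| <= x]%R `&` [set t | x < Z t]%R))%E.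
Proof.
rewrite E1_eq -(Hsw s B1 mB1); apply: le_measure; rewrite ?inE.
- apply: (meas_prodset _ B1 (fun i => X (s i))); first exact: mB1.
  by move=> i; apply: mX.
- apply: measurableI.
    have mL : measurable_fun setT L by apply: maxY_meas => i il; apply: mY; rewrite (leq_ltn_trans il).
    by case: (meas_set (fun t => `|L t|) (cst x) _ _) => //; exact: measurableT_comp.
  by case: (meas_set (cst x) Z _ _) => //; apply: mY.
- exact: Sw_sub.
Qed.

Lemma Sw_sup2 : l = 2%N -> [set t | `|L t| <= x]%R `&` [set t | x < Z t]%R `<=`
  [set t | forall i : 'I_n, B1 i (X (s i) t)].
Proof.
move=> le2 t /= [hL hZ] i.
have L0 : L t = Y 0%N t.
  by rewrite /L maxY_eq0 // => k; rewrite le2 ltnS leqn0 => /eqP->.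
rewrite L0 YE /= normrN in hL; rewrite ZE in hZ.
have [->|ni0] := eqVneq i i0.
  by rewrite /s tpermL /B1 /=.
have [->|nj] := eqVneq i j.
  by rewrite /s tpermR /B1 /= (negbTE l1) eqxx.
rewrite /s tpermD; last 2 first.
- by rewrite eq_sym.
- by rewrite eq_sym.
have vi0 : (val i == 0%N) = false.
  by apply/negbTE; apply: contra ni0 => /eqP h; apply/eqP/val_inj.
have vij : (val i == l.-1) = false.
  by apply/negbTE; apply: contra nj => /eqP h; apply/eqP/val_inj.
rewrite /B1 /= vi0 vij.
by rewrite le2 /= ltnS leqn0 vi0.
Qed.

Lemma key_eq2 : l = 2%N -> (P ([set t | L t < - x]%R `&` [set t | `|Z t| <= x]%R) =
  P ([set t | `|L t| <= x]%R `&` [set t | x < Z t]%R))%E.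
Proof.
move=> le2; apply/eqP; rewrite eq_le key_le /=.
rewrite E1_eq -(Hsw s B1 mB1); apply: le_measure; rewrite ?inE.
- apply: measurableI.
    have mL : measurable_fun setT L by apply: maxY_meas => i il; apply: mY; rewrite (leq_ltn_trans il).
    by case: (meas_set (fun t => `|L t|) (cst x) _ _) => //; exact: measurableT_comp.
  by case: (meas_set (cst x) Z _ _) => //; apply: mY.
- apply: (meas_prodset _ B1 (fun i => X (s i))); first exact: mB1.
  by move=> i; apply: mX.
- exact: Sw_sup2.
Qed.

End L.

Lemma siamx : SIAMX P n Y.
Proof.
have M1 : maxY Y 1 = Y 0%N.
  by apply/funext => t; apply: maxY_eq0 => i; rewrite ltnS leqn0 => /eqP->.
split.
  have -> : (fun t => `|maxY Y 2 t|) = (fun t => `|Num.max (maxY Y 1 t) (Y 1%N t)|).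
    by apply/funext => t; rewrite maxYS.
  rewrite M1.
  apply: cdf_dist_eq.
  - by apply: measurableT_comp => //; apply: mY; rewrite (leq_trans _ n2).
  - apply: measurableT_comp => //; apply: measurable_maxr; apply: mY => //.
    by rewrite (leq_trans _ n2).
  move=> x.
  have mL : measurable_fun setT (maxY Y 1) by rewrite M1; apply: mY; rewrite (leq_trans _ n2).
  have h := decomp (maxY Y 1) (Y 1%N) x mL (mY 1%N n2).
  rewrite (@key_eq2 2%N x (leqnn 2) n2 erefl) in h.
  have fc := fin_num_measure P _ (@mE2 2%N x (leqnn 2) n2).
  rewrite /= M1 in h fc.
  exact: adde_cancel fc h.
move=> l /andP[l3 ln] x.
have l2 : (2 <= l)%N by exact: ltnW.
have l1n : (l.-1 < n)%N by rewrite (leq_trans _ ln) // ltn_predL (leq_trans _ l2).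
have mL : measurable_fun setT (maxY Y l.-1).
  by apply: maxY_meas => i il; apply: mY; rewrite (leq_ltn_trans il).
have h := decomp (maxY Y l.-1) (Y l.-1) x mL (mY l.-1 l1n).
have k := @key_le l x l2 ln.
have -> : maxY Y l = (fun t => Num.max (maxY Y l.-1 t) (Y l.-1 t)).
  by apply/funext => t; rewrite -{1}(ltn_predK l2) maxYS.
rewrite /=.
rewrite -(leeD2rE _ _ (fin_num_measure P _ (@mE2 l x l2 ln))) -h.
exact: leeD2l k.
Qed.

End Key.

End Main.

Lemma oppmax (R : realType) (x y : R) : - Num.max x y = Num.min (- x) (- y).
Proof.
rewrite maxEle minEle; case: (lerP x y) => h1; case: (lerP (-x) (-y)) => h2; lra.
Qed.

Lemma minY_neg d (T : measurableType d) (R : realType) (Y : nat -> T -> R) l t :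
  minY Y l t = - maxY (fun i t => - Y i t) l t.
Proof.
rewrite /minY /maxY /=; symmetry.
rewrite (big_morph -%R (@oppmax R) (opprK (Y 0%N t))).
by apply: eq_bigr => i _; rewrite opprK.
Qed.

Lemma exch_sw d (T : measurableType d) (R : realType) (P : probability T R) n X :
  exchangeable P n X -> forall (s : {perm 'I_n}) (B : 'I_n -> set R), (forall i, measurable (B i)) ->
  P [set t | forall i : 'I_n, B i (X (s i) t)] = P [set t | forall i : 'I_n, B i (X i t)].
Proof.
move=> E s B mB.
exact: (E s [set f | forall i, B i (f i)] (@vec_meas_prod R n B mB)).
Qed.

Lemma sw_neg d (T : measurableType d) (R : realType) (P : probability T R) n (X : nat -> T -> R) :
  (forall (s : {perm 'I_n}) (B : 'I_n -> set R), (forall i, measurable (B i)) ->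
  P [set t | forall i : 'I_n, B i (X (s i) t)] = P [set t | forall i : 'I_n, B i (X i t)]) ->
  forall (s : {perm 'I_n}) (B : 'I_n -> set R), (forall i, measurable (B i)) ->
  P [set t | forall i : 'I_n, B i (- X (s i) t)] = P [set t | forall i : 'I_n, B i (- X i t)].
Proof.
move=> H s B mB.
have mB' : forall i, measurable [set y : R | B i (- y)].
  move=> i; have := @oppr_measurable R setT measurableT _ (mB i).
  by rewrite setTI.
exact: (H s (fun i => [set y : R | B i (- y)]) mB').
Qed.

Theorem corollary3p11 (d : measure_display) (T : measurableType d) (R : realType)
  (P : probability T R) (n : nat) (X : nat -> T -> R) :
  (2 <= n)%N ->
  (forall i : nat, (i < n)%N -> measurable_fun setT (X i)) ->
  exchangeable P n X ->
  SIAMX P n (negfirst X) /\ SIAMN P n (negfirst X).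
Proof.
move=> n2 mX E.
have H := @exch_sw _ _ _ P n X E.
split; first exact: (@siamx _ _ _ P n X n2 mX H).
pose X' := fun i t => - X i t.
have mX' : forall i, (i < n)%N -> measurable_fun setT (X' i).
  by move=> i ilt; apply: measurableT_comp; [exact: oppr_measurable| exact: mX].
have H' := @sw_neg _ _ _ P n X H.
have [S1 S2] := @siamx _ _ _ P n X' n2 mX' H'.
have NE : (fun i t => - negfirst X i t) = negfirst X'.
  apply/funext => i; apply/funext => t; rewrite /negfirst /X'.
  by case: (i == 0%N).
have ME : forall l, (fun t => `|minY (negfirst X) l t|) = (fun t => `|maxY (negfirst X') l t|).
  by move=> l; apply/funext => t; rewrite minY_neg NE normrN.
have E0 : (fun t => `|negfirst X 0%N t|) = (fun t => `|negfirst X' 0%N t|).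
  by apply/funext => t; rewrite /negfirst /X' /= opprK normrN.
rewrite /SIAMN ME E0; split; first exact: S1.
by move=> l hl; rewrite !ME; exact: S2.
Qed.
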